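(* The function $\phi$ is twice differentiable on $(0,1)$ and satisfies $0 < \phi''(u) < \phi'(u)/u$ for all $u \in (0,1)$.
   Context: $\log$ denotes the base-2 logarithm and $\ln$ the natural logarithm. Let $h(q) = -q\log q - (1-q)\log(1-q)$ be the binary entropy function on $[0,1]$ (with $0\log 0 = 0$). Define $\phi:[0,1]\to[0,1]$ by $\phi(u) = h\bigl(\tfrac{1-\sqrt{1-u^2}}{2}\bigr)$. *)

(* Defs.v *)
From Stdlib Require Import Reals.
Open Scope R_scope.

Definition log2 (x : R) : R := ln x / ln 2.

Definition xlog2 (q : R) : R := if Req_EM_T q 0 then 0 else q * log2 q.

Definition h (q : R) : R := - xlog2 q - xlog2 (1 - q).

Definition phi (u : R) : R := h ((1 - sqrt (1 - u ^ 2)) / 2).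

(* Main.v *)
Require Import Defs.
From Stdlib Require Import Reals Lra.
From Coquelicot Require Import Coquelicot.
Open Scope R_scope.

Lemma der_eq (f : R -> R) (x l l' : R) : is_derive f x l' -> l' = l -> is_derive f x l.
Proof. intros H ->; exact H. Qed.

Definition S v := sqrt (1 - v^2).
Definition L s := ln (1+s) - ln (1-s).
Definition phi1 v := v * L (S v) / (2 * S v * ln 2).
Definition phi2 v := (L (S v) - 2 * S v) / (2 * ln 2 * S v ^ 3).
Definition F v := - ((1 - S v)/2 * ln ((1 - S v)/2) + (1 + S v)/2 * ln ((1 + S v)/2)) / ln 2.

Lemma S_facts u : 0 < u < 1 -> 0 < S u < 1 /\ S u * S u = 1 - u*u.
Proof.
intros Hu. unfold S. replace (u^2) with (u*u) by ring. assert (0 < 1 - u*u) by nra.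
split. split. apply sqrt_lt_R0; auto.
assert (sqrt (1 - u*u) < sqrt 1) by (apply sqrt_lt_1; nra). rewrite sqrt_1 in H0; exact H0.
apply sqrt_sqrt; nra.
Qed.

Lemma phi_F u : 0 < u < 1 -> phi u = F u.
Proof.
intros Hu. destruct (S_facts u Hu) as [[H1 H2] H3].
unfold phi, F, h, xlog2, log2. fold (S u).
replace (1 - (1 - S u)/2) with ((1 + S u)/2) by field.
destruct (Req_EM_T ((1 - S u)/2) 0). lra.
destruct (Req_EM_T ((1 + S u)/2) 0). lra.
field. assert (ln 2 > 0) by (rewrite <- ln_1; apply ln_increasing; lra). lra.
Qed.

Lemma loc01 u (P : R -> Prop) : 0 < u < 1 -> (forall v, 0 < v < 1 -> P v) -> locally u P.
Proof.
intros Hu HP. assert (He: 0 < Rmin u (1-u)) by (apply Rmin_glb_lt; lra).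
exists (mkposreal _ He). intros y Hy. apply HP.
change (Rabs (y - u) < Rmin u (1-u)) in Hy.
apply Rabs_def2 in Hy. destruct Hy. 
pose proof (Rmin_l u (1-u)). pose proof (Rmin_r u (1-u)). lra.
Qed.
Lemma ln2pos : 0 < ln 2.
Proof. rewrite <- ln_1; apply ln_increasing; lra. Qed.

Lemma dF u : 0 < u < 1 -> is_derive F u (phi1 u).
Proof.
intros Hu. destruct (S_facts u Hu) as [[H1 H2] H3]. unfold S in H1, H2, H3.
pose proof ln2pos.
unfold F, phi1, S. eapply der_eq. auto_derive.
{ unfold S in *. replace (u^2) with (u*u) in * by ring. replace (1 + - (u * (u * 1))) with (1 - u*u) by ring. repeat split; try nra. }
replace (1 + - (u * (u * 1))) with (1 - u*u) by ring.
unfold L, S in *. replace (u^2) with (u*u) in * by ring.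
set (s := sqrt (1 - u*u)) in *.
reflexivity.
unfold L; replace (u^2) with (u*u) in * by ring. set (s := sqrt (1 - u*u)) in *.
replace ((1 + - s) * / 2) with ((1-s)/2) by (unfold Rdiv; ring).
replace ((1 + s) * / 2) with ((1+s)/2) by (unfold Rdiv; ring).
rewrite !ln_div by lra.
field. repeat split; lra.
Qed.
Lemma dphi1 u : 0 < u < 1 -> is_derive phi1 u (phi2 u).
Proof.
intros Hu. destruct (S_facts u Hu) as [[H1 H2] H3]. unfold S in H1, H2, H3.
pose proof ln2pos.
unfold phi1, phi2, L, S. eapply der_eq. auto_derive.
{ replace (u^2) with (u*u) in * by ring. replace (1 + - (u * (u * 1))) with (1 - u*u) by ring. repeat split; try nra. }
replace (1 + - (u * (u * 1))) with (1 - u*u) by ring.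
reflexivity.
replace (u^2) with (u*u) in * by ring. set (s := sqrt (1 - u*u)) in *.
replace (1 + - s) with (1 - s) by ring.
field_simplify. 2: repeat split; lra.
replace (u^2) with (1 - s^2) by (simpl; lra).
field. split. lra. split. lra.
replace (-4 * s ^ 5 * ln 2 ^ 2 + 4 * s ^ 3 * ln 2 ^ 2) with (4 * (s^3 * (1 - s*s)) * (ln 2 * ln 2)) by ring.
assert (0 < s^3) by (apply pow_lt; lra). assert (0 < 1 - s*s) by nra.
apply Rgt_not_eq. apply Rmult_lt_0_compat. apply Rmult_lt_0_compat. lra. apply Rmult_lt_0_compat; lra. apply Rmult_lt_0_compat; lra.
repeat split; lra.
Qed.
Lemma ineq1 s : 0 < s < 1 -> 2 * s < L s.
Proof.
intros Hs.
destruct (MVT_cor2 (fun x => L x - 2 * x) (fun x => 2 / (1 - x*x) - 2) 0 s) as [c [Hc1 Hc2]].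
lra.
{ intros c Hc. apply is_derive_Reals. unfold L. eapply der_eq. auto_derive. repeat split; lra. reflexivity.
  field. repeat split; nra. }
unfold L in Hc1 at 2. replace (1+0) with 1 in Hc1 by ring. replace (1-0) with 1 in Hc1 by ring.
rewrite ln_1 in Hc1.
assert (0 < 1 - c*c) by nra. assert (1 - c*c < 1) by nra.
assert (1 < 1 / (1 - c*c)). { apply (Rmult_lt_reg_r (1 - c*c)). lra. field_simplify; lra. }
assert (0 < (2 / (1 - c * c) - 2) * (s - 0)). { apply Rmult_lt_0_compat. unfold Rdiv in *. lra. lra. }
lra.
Qed.

Lemma ineq2 s : 0 < s < 1 -> L s * (1 - s*s) < 2 * s.
Proof.
intros Hs.
destruct (MVT_cor2 (fun x => 2 * x / (1 - x*x) - L x) (fun x => 4 * (x*x) / ((1 - x*x)*(1-x*x))) 0 s) as [c [Hc1 Hc2]].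
lra.
{ intros c Hc. assert (0 < 1 - c*c) by nra. apply is_derive_Reals. unfold L. eapply der_eq. auto_derive. repeat split; try lra. reflexivity.
  field. repeat split; try lra. }
unfold L in Hc1 at 2. replace (1+0) with 1 in Hc1 by ring. replace (1-0) with 1 in Hc1 by ring.
rewrite ln_1 in Hc1.
assert (0 < 1 - c*c) by nra.
assert (0 < 4 * (c*c) / ((1 - c*c)*(1-c*c)) * (s - 0)).
{ apply Rmult_lt_0_compat. apply Rdiv_lt_0_compat. nra. nra. lra. }
assert (0 < 1 - s*s) by nra.
assert (L s < 2 * s / (1 - s*s)). { replace (2 * 0 / (1 - 0*0)) with 0 in Hc1 by field. lra. }
apply (Rmult_lt_compat_r (1 - s*s)) in H2; auto.
replace (2 * s / (1 - s * s) * (1 - s * s)) with (2*s) in H2 by (field; lra). exact H2.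
Qed.
Theorem lemma1 :
  exists phi1 phi2 : R -> R,
    forall u : R, 0 < u < 1 ->
      derivable_pt_lim phi u (phi1 u) /\
      derivable_pt_lim phi1 u (phi2 u) /\
      0 < phi2 u < phi1 u / u.
Proof.
exists phi1, phi2. intros u Hu.
split; [|split].
- apply is_derive_Reals. apply (is_derive_ext_loc F phi).
  + apply loc01; auto. intros v Hv. symmetry. apply phi_F; auto.
  + apply dF; auto.
- apply is_derive_Reals. apply dphi1; auto.
- destruct (S_facts u Hu) as [[H1 H2] H3].
  pose proof ln2pos. pose proof (ineq1 (S u) (conj H1 H2)). pose proof (ineq2 (S u) (conj H1 H2)).
  unfold phi1, phi2. set (s := S u) in *. set (l := L s) in *.
  assert (0 < s^3) by (apply pow_lt; lra).
  split.
  + apply Rdiv_lt_0_compat; [lra|]. apply Rmult_lt_0_compat; lra.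
  + replace (u * l / (2 * s * ln 2) / u) with (l / (2 * s * ln 2)) by (field; repeat split; lra).
    apply Rminus_gt_0_lt.
    replace (l / (2 * s * ln 2) - (l - 2 * s) / (2 * ln 2 * s ^ 3)) with ((2*s - l * (1 - s*s)) / (2 * ln 2 * s ^ 3)) by (field; repeat split; lra).
    apply Rdiv_lt_0_compat; [lra|]. apply Rmult_lt_0_compat; lra.
Qed.
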